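(* Let $f(a,b,c,d,e,x,y)$ be analytic in a neighbourhood of the origin of $\mathbb{C}^7$, and for fixed $(a,b,c,d,e)$ write $F(X,Y)=f(a,b,c,d,e,X,Y)$. The following are equivalent. (i) In some neighbourhood of the origin, $f$ satisfies $$x\Big\{F(x,y)-F(x,yq)-(d+e)q^{-1}\big[F(x,yq)-F(x,yq^2)\big]+de\,q^{-2}\big[F(x,yq^2)-F(x,yq^3)\big]\Big\}$$ $$=y\Big\{\big[F(x,y)-F(xq,y)\big]-(a+b+c)\big[F(x,yq)-F(xq,yq)\big]+(ab+ac+bc)\big[F(x,yq^2)-F(xq,yq^2)\big]-abc\big[F(x,yq^3)-F(xq,yq^3)\big]\Big\}.$$ (ii) $f$ can be expanded in terms of the polynomials $\phi_n^{(a,b,c;d,e)}(x,y|q)$. That is, there exist functions $\mu_n=\mu_n(a,b,c,d,e)$, $n\ge 0$, defined near the origin of $\mathbb{C}^5$, such that $$f(a,b,c,d,e,x,y)=\sum_{n\ge0}\mu_n\,\phi_n^{(a,b,c;d,e)}(x,y|q).$$ This identity is meant as an identity of power series in $(x,y)$: for all $j,k\ge0$, the coefficient of $x^jy^k$ in the Taylor expansion of $f$ in $(x,y)$ equals $\mu_{j+k}$ times the coefficient of $x^jy^k$ in $\phi_{j+k}^{(a,b,c;d,e)}(x,y|q)$. Moreover, in this case $\sum_n\mu_n x^n=f(a,b,c,d,e,x,0)$.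
   Context: Throughout, $0<q<1$. For $\alpha\in\mathbb{C}$, $(\alpha;q)_0=1$, $(\alpha;q)_n=\prod_{j=0}^{n-1}(1-\alpha q^j)$ and $(\alpha;q)_\infty=\prod_{j\ge0}(1-\alpha q^j)$. Also $(\alpha_1,\dots,\alpha_r;q)_n=\prod_i(\alpha_i;q)_n$. The $q$-binomial coefficient is $\begin{bmatrix}n\\k\end{bmatrix}=\frac{(q;q)_n}{(q;q)_k(q;q)_{n-k}}$. The generalized Al-Salam–Carlitz polynomials are $$\phi_n^{(a,b,c;d,e)}(x,y|q)=\sum_{k=0}^n\begin{bmatrix}n\\k\end{bmatrix}\frac{(a,b,c;q)_k}{(d,e;q)_k}x^{n-k}y^k,$$ defined whenever $d,e\notin\{q^{-m}:m\ge0\}$ (in particular near $d=e=0$). *)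

(* Defs.v *)
From Stdlib Require Import Reals.
From Coquelicot Require Import Coquelicot.
Set Implicit Arguments.

Open Scope C_scope.

Definition psum5 {G : AbelianMonoid}
  (g : nat -> nat -> nat -> nat -> nat -> G) (N : nat) : G :=
  sum_n (fun i1 => sum_n (fun i2 => sum_n (fun i3 => sum_n (fun i4 =>
    sum_n (fun i5 => g i1 i2 i3 i4 i5) N) N) N) N) N.

Definition psum7 {G : AbelianMonoid}
  (g : nat -> nat -> nat -> nat -> nat -> nat -> nat -> G) (N : nat) : G :=
  sum_n (fun i1 => sum_n (fun i2 => sum_n (fun i3 => sum_n (fun i4 =>
    sum_n (fun i5 => sum_n (fun i6 => sum_n (fun i7 =>
      g i1 i2 i3 i4 i5 i6 i7) N) N) N) N) N) N) N.

Definition coef7 := nat -> nat -> nat -> nat -> nat -> nat -> nat -> C.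

(** A function f is
    analytic in a neighbourhood of the origin of C^7 iff
    [exists cf r, analytic7_rep cf r f]. *)
Definition analytic7_rep (cf : coef7) (r : R)
  (f : C -> C -> C -> C -> C -> C -> C -> C) : Prop :=
  (0 < r)%R /\
  (exists M : R, forall N : nat,
     (psum7 (fun i1 i2 i3 i4 i5 i6 i7 =>
        Cmod (cf i1 i2 i3 i4 i5 i6 i7) * r ^ (i1 + i2 + i3 + i4 + i5 + i6 + i7))%R N
      <= M)%R) /\
  (forall z1 z2 z3 z4 z5 z6 z7 : C,
     (Cmod z1 < r)%R -> (Cmod z2 < r)%R -> (Cmod z3 < r)%R -> (Cmod z4 < r)%R ->
     (Cmod z5 < r)%R -> (Cmod z6 < r)%R -> (Cmod z7 < r)%R ->
     filterlim
       (psum7 (fun i1 i2 i3 i4 i5 i6 i7 =>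
          cf i1 i2 i3 i4 i5 i6 i7 * pow_n z1 i1 * pow_n z2 i2 * pow_n z3 i3
          * pow_n z4 i4 * pow_n z5 i5 * pow_n z6 i6 * pow_n z7 i7))
       eventually (locally (f z1 z2 z3 z4 z5 z6 z7))).

(** [taylor_xy_is cf a b c d e j k v]: the coefficient of x^j y^k in the Taylor
    expansion in (x,y) of f(a,b,c,d,e,x,y) (f represented by cf, variables
    ordered a,b,c,d,e,x,y) equals v, i.e. the (absolutely convergent) series
    sum_{i1..i5} cf i1 .. i5 j k a^i1 b^i2 c^i3 d^i4 e^i5 sums to v. *)
Definition taylor_xy_is (cf : coef7) (a b c d e : C) (j k : nat) (v : C) : Prop :=
  filterlim
    (psum5 (fun i1 i2 i3 i4 i5 =>
       cf i1 i2 i3 i4 i5 j k * pow_n a i1 * pow_n b i2 * pow_n c i3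
       * pow_n d i4 * pow_n e i5))
    eventually (locally v).

Fixpoint qpoch (q : R) (alpha : C) (n : nat) : C :=
  match n with
  | O => 1
  | S m => qpoch q alpha m * (1 - alpha * RtoC (q ^ m))
  end.

Definition qbinom (q : R) (n k : nat) : C :=
  qpoch q (RtoC q) n / (qpoch q (RtoC q) k * qpoch q (RtoC q) (n - k)).

Definition phi_coef (q : R) (a b c d e : C) (n k : nat) : C :=
  qbinom q n k * (qpoch q a k * qpoch q b k * qpoch q c k)
  / (qpoch q d k * qpoch q e k).

Definition phi (q : R) (a b c d e : C) (n : nat) (x y : C) : C :=
  sum_n (fun k => if (k <=? n)%nat
                  then phi_coef q a b c d e n k * pow_n x (n - k) * pow_n y k
                  else RtoC 0) n.

Definition qeq (q : R) (f : C -> C -> C -> C -> C -> C -> C -> C)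
  (a b c d e x y : C) : Prop :=
  let F := f a b c d e in
  let Q := RtoC q in
  x * (F x y - F x (y * Q)
       - (d + e) / Q * (F x (y * Q) - F x (y * Q * Q))
       + d * e / (Q * Q) * (F x (y * Q * Q) - F x (y * Q * Q * Q)))
  = y * ((F x y - F (x * Q) y)
         - (a + b + c) * (F x (y * Q) - F (x * Q) (y * Q))
         + (a * b + a * c + b * c) * (F x (y * Q * Q) - F (x * Q) (y * Q * Q))
         - a * b * c * (F x (y * Q * Q * Q) - F (x * Q) (y * Q * Q * Q))).

Definition expandable (q : R) (cf : coef7)
  (mu : C -> C -> C -> C -> C -> nat -> C) : Prop :=
  exists rho : R, (0 < rho)%R /\
    forall a b c d e : C,
      (Cmod a < rho)%R -> (Cmod b < rho)%R -> (Cmod c < rho)%R ->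
      (Cmod d < rho)%R -> (Cmod e < rho)%R ->
      forall j k : nat,
        taylor_xy_is cf a b c d e j k
          (mu a b c d e (j + k)%nat * phi_coef q a b c d e (j + k) k).

(* Main.v *)
From Stdlib Require Import Reals Lra Lia Classical ClassicalEpsilon.
From Coquelicot Require Import Coquelicot.
Require Import Defs.
Set Implicit Arguments.

Lemma sum_zero_gen {G : AbelianMonoid} n : sum_n (fun _ => @zero G) n = zero.
Proof. induction n. now rewrite sum_O. rewrite sum_Sn, IHn. apply plus_zero_l. Qed.

Lemma sum_tail_zero {G : AbelianMonoid} (u : nat -> G) N N' :
  (N <= N')%nat -> (forall j, (N < j)%nat -> u j = zero) -> sum_n u N' = sum_n u N.
Proof.
  intros H Hz. induction H. reflexivity.
  rewrite sum_Sn, IHle, Hz by lia. apply plus_zero_r.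
Qed.

Lemma sum_if_le {G : AbelianMonoid} (u : nat -> G) N0 N1 :
  (N0 <= N1)%nat -> sum_n (fun i => if Nat.leb i N0 then u i else zero) N1 = sum_n u N0.
Proof.
  intros H. rewrite (sum_tail_zero _ H).
  - apply sum_n_ext_loc. intros n Hn. apply Nat.leb_le in Hn. now rewrite Hn.
  - intros j Hj. destruct (Nat.leb j N0) eqn:E; auto. apply Nat.leb_le in E; lia.
Qed.

Lemma sum_if_eq {G : AbelianMonoid} (u : nat -> G) m n :
  (m <= n)%nat -> sum_n (fun i => if Nat.eqb i m then u i else zero) n = u m.
Proof.
  intros H. rewrite (sum_tail_zero _ H).
  - destruct m. rewrite sum_O. reflexivity.
    rewrite sum_Sn. rewrite Nat.eqb_refl.
    rewrite (sum_n_ext_loc _ (fun _ => zero)). rewrite sum_zero_gen. apply plus_zero_l.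
    intros k Hk. destruct (Nat.eqb k (S m)) eqn:E; auto. apply Nat.eqb_eq in E; lia.
  - intros j Hj. destruct (Nat.eqb j m) eqn:E; auto. apply Nat.eqb_eq in E; lia.
Qed.

Lemma sum_shift {G : AbelianMonoid} (u : nat -> G) m :
  sum_n u (S m) = plus (u O) (sum_n (fun k => u (S k)) m).
Proof.
  induction m. rewrite sum_Sn, !sum_O. reflexivity.
  rewrite sum_Sn, IHm, sum_Sn. symmetry; apply plus_assoc.
Qed.


Fixpoint fn (k : nat) (T : Type) : Type :=
  match k with O => T | S k => nat -> fn k T end.

Fixpoint ps {G : AbelianMonoid} (k : nat) : fn k G -> nat -> G :=
  match k return fn k G -> nat -> G with
  | O => fun g _ => g
  | S k => fun g N => sum_n (fun i => ps k (g i) N) N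
  end.

Fixpoint fconst {T} (k : nat) (z : T) : fn k T :=
  match k return fn k T with O => z | S k => fun _ => fconst k z end.

Fixpoint fmap2 {A B D} (k : nat) (op : A -> B -> D) : fn k A -> fn k B -> fn k D :=
  match k return fn k A -> fn k B -> fn k D with
  | O => fun g h => op g h
  | S k => fun g h i => fmap2 k op (g i) (h i)
  end.

Fixpoint fall2 {A B} (k : nat) (Rel : A -> B -> Prop) : fn k A -> fn k B -> Prop :=
  match k return fn k A -> fn k B -> Prop with
  | O => fun g h => Rel g h
  | S k => fun g h => forall i, fall2 k Rel (g i) (h i)
  end.

Fixpoint cut {T} (k : nat) (z : T) (N0 : nat) : fn k T -> fn k T :=
  match k return fn k T -> fn k T with
  | O => fun g => g
  | S k => fun g i => if Nat.leb i N0 then cut k z N0 (g i) else fconst k z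
  end.

Fixpoint fsum {G : AbelianMonoid} (k : nat) : (nat -> fn k G) -> nat -> fn k G :=
  match k return (nat -> fn k G) -> nat -> fn k G with
  | O => fun g M => sum_n g M
  | S k => fun g M i => fsum k (fun j => g j i) M
  end.

Lemma ps_rel {G H : AbelianMonoid} (Rel : G -> H -> Prop)
  (Hs : forall (f : nat -> G) (g : nat -> H) N, (forall i, Rel (f i) (g i)) -> Rel (sum_n f N) (sum_n g N))
  k (g : fn k G) (h : fn k H) N : fall2 k Rel g h -> Rel (ps k g N) (ps k h N).
Proof. induction k; simpl; auto. Qed.

Lemma ps_map2 {G H D : AbelianMonoid} (op : G -> H -> D)
  (Hs : forall (f : nat -> G) (g : nat -> H) N, sum_n (fun i => op (f i) (g i)) N = op (sum_n f N) (sum_n g N))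
  k (g : fn k G) (h : fn k H) N : ps k (fmap2 k op g h) N = op (ps k g N) (ps k h N).
Proof.
  induction k; simpl; auto. rewrite <- Hs. apply sum_n_ext. intros. apply IHk.
Qed.

Lemma ps_const0 {G : AbelianMonoid} k N : ps k (fconst k (@zero G)) N = zero.
Proof.
  induction k; simpl; auto. rewrite (sum_n_ext _ (fun _ => zero)). apply sum_zero_gen. auto.
Qed.

Lemma ps_cut {G : AbelianMonoid} k (g : fn k G) N0 N1 :
  (N0 <= N1)%nat -> ps k (cut k zero N0 g) N1 = ps k g N0.
Proof.
  revert g. induction k; intros g H; simpl; auto.
  rewrite (sum_n_ext _ (fun i => if Nat.leb i N0 then ps k (g i) N0 else zero)).
  apply sum_if_le; auto.
  intros n. destruct (Nat.leb n N0); auto. apply ps_const0.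
Qed.

Lemma ps_fsum {G : AbelianMonoid} k (g : nat -> fn k G) M N :
  ps k (fsum k g M) N = sum_n (fun j => ps k (g j) N) M.
Proof.
  revert g. induction k; intros g; simpl; auto.
  rewrite (sum_n_ext _ (fun i => sum_n (fun j => ps k (g j i) N) M)).
  2: intros; apply IHk.
  apply sum_n_switch.
Qed.


Open Scope C_scope.
Ltac absp := repeat match goal with
  | |- context [@pow_n C_Ring ?x ?n] =>
  let p := fresh "p" in pose (p := (@pow_n C_Ring x n : C)); change (@pow_n C_Ring x n) with p; clearbody p
  | |- context [@sum_n C_AbelianMonoid ?x ?n] =>
  let p := fresh "p" in pose (p := (@sum_n C_AbelianMonoid x n : C)); change (@sum_n C_AbelianMonoid x n) with p; clearbody p
  | |- context [@ps C_AbelianMonoid ?k ?x ?n] =>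
  let p := fresh "p" in pose (p := (@ps C_AbelianMonoid k x n : C)); change (@ps C_AbelianMonoid k x n) with p; clearbody p
  end.
Ltac Cring := match goal with |- ?a = ?b => change (@eq C a b) end; absp; ring.
Ltac Rring := match goal with |- ?a = ?b => change (@eq R a b) end; ring.

Lemma plusC (a b : C) : plus a b = a + b. Proof. reflexivity. Qed.
Lemma zeroC : (@zero C_AbelianMonoid) = RtoC 0. Proof. reflexivity. Qed.
Lemma plusR (a b : R) : plus a b = (a + b)%R. Proof. reflexivity. Qed.
Lemma zeroR : (@zero R_AbelianMonoid) = 0%R. Proof. reflexivity. Qed.

Lemma Cminus0 (x : C) : x - RtoC 0 = x. Proof. ring. Qed.
Lemma sumC_Sn (u : nat -> C) n : sum_n u (S n) = sum_n u n + u (S n).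
Proof. rewrite sum_Sn. reflexivity. Qed.
Lemma sumR_Sn (u : nat -> R) n : sum_n u (S n) = (sum_n u n + u (S n))%R.
Proof. rewrite sum_Sn. reflexivity. Qed.

Lemma sumC_minus (f g : nat -> C) N : sum_n (fun i => f i - g i) N = sum_n f N - sum_n g N.
Proof. induction N. rewrite !sum_O; auto. rewrite !sumC_Sn, IHN. Cring. Qed.
Lemma sumC_plus (f g : nat -> C) N : sum_n (fun i => f i + g i) N = sum_n f N + sum_n g N.
Proof. induction N. rewrite !sum_O; auto. rewrite !sumC_Sn, IHN. Cring. Qed.
Lemma sumR_minus (f g : nat -> R) N : sum_n (fun i => f i - g i)%R N = (sum_n f N - sum_n g N)%R.
Proof. induction N. rewrite !sum_O; auto. rewrite !sumR_Sn, IHN. Rring. Qed.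
Lemma sumC_scal (c : C) (f : nat -> C) N : sum_n (fun i => c * f i) N = c * sum_n f N.
Proof. induction N. rewrite !sum_O; auto. rewrite !sumC_Sn, IHN. Cring. Qed.
Lemma sumC_scal_r (c : C) (f : nat -> C) N : sum_n (fun i => f i * c) N = sum_n f N * c.
Proof. induction N. rewrite !sum_O; auto. rewrite !sumC_Sn, IHN. Cring. Qed.
Lemma sumR_le (f g : nat -> R) N : (forall i, f i <= g i)%R -> (sum_n f N <= sum_n g N)%R.
Proof. intros H. induction N. rewrite !sum_O; auto. rewrite !sumR_Sn. specialize (H (S N)). lra. Qed.
Lemma Cmod_sum (f : nat -> C) N : (Cmod (sum_n f N) <= sum_n (fun i => Cmod (f i)) N)%R.
Proof.
  induction N. rewrite !sum_O; lra.
  rewrite sumC_Sn, sumR_Sn. eapply Rle_trans. apply Cmod_triangle. lra.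
Qed.
Lemma Cmod_sum_le (f : nat -> C) (g : nat -> R) N :
  (forall i, Cmod (f i) <= g i)%R -> (Cmod (sum_n f N) <= sum_n g N)%R.
Proof. intros H. eapply Rle_trans. apply Cmod_sum. now apply sumR_le. Qed.

Lemma ps_norm k (g : fn k C) (h : fn k R) N :
  fall2 k (fun u v => Cmod u <= v)%R g h -> (Cmod (ps k g N) <= ps k h N)%R.
Proof. apply (ps_rel (fun (u : C) (v : R) => Cmod u <= v)%R). intros. now apply Cmod_sum_le. Qed.
Lemma ps_le k (g h : fn k R) N : fall2 k Rle g h -> (ps k g N <= ps k h N)%R.
Proof. apply (ps_rel Rle). intros. now apply sumR_le. Qed.
Lemma ps_minusC k (g h : fn k C) N : ps k (fmap2 k Cminus g h) N = ps k g N - ps k h N.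
Proof. apply (ps_map2 Cminus). intros; apply sumC_minus. Qed.
Lemma ps_minusR k (g h : fn k R) N : ps k (fmap2 k Rminus g h) N = (ps k g N - ps k h N)%R.
Proof. apply (ps_map2 Rminus). intros; apply sumR_minus. Qed.

Lemma fall2_cut {T} k (z : T) N0 (g : fn k T) :
  fall2 k (fun u v => u = v \/ u = z) (cut k z N0 g) g.
Proof.
  induction k; simpl; auto. intros i. destruct (Nat.leb i N0); auto.
  clear IHk. generalize (g i). induction k; simpl; auto.
Qed.

Lemma fall2_impl {A B} k (R1 R2 : A -> B -> Prop) g h :
  (forall u v, R1 u v -> R2 u v) -> fall2 k R1 g h -> fall2 k R2 g h.
Proof. induction k; simpl; auto. Qed.

Lemma ps_nonneg k (w : fn k R) N : fall2 k (fun _ v => 0 <= v)%R w w -> (0 <= ps k w N)%R.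
Proof.
  revert w. induction k; simpl; auto. intros w H.
  rewrite <- zeroR, <- (sum_zero_gen N). apply sumR_le. intros; apply IHk; auto.
Qed.

Lemma ps_mono k (w : fn k R) N0 N1 : fall2 k (fun _ v => 0 <= v)%R w w -> (N0 <= N1)%nat ->
  (ps k w N0 <= ps k w N1)%R.
Proof.
  intros H Hle. rewrite <- (ps_cut k w Hle). apply ps_le.
  revert w H. induction k; simpl. intros; lra.
  intros w H i. destruct (Nat.leb i N0); auto.
  specialize (H i). generalize (w i) H. clear. induction k; simpl; auto.
Qed.

Lemma sandwich k (g h : fn k C) (w : fn k R) N0 N1 :
  (N0 <= N1)%nat ->
  fall2 k (fun u v => Cmod u <= v)%R h w ->
  fall2 k eq (cut k (RtoC 0) N0 h) (cut k (RtoC 0) N0 g) ->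
  (Cmod (ps k h N1 - ps k g N0) <= ps k w N1 - ps k w N0)%R.
Proof.
  intros Hle. revert g h w. induction k; simpl; intros g h w Hh Hc.
  - subst. replace (g - g) with (RtoC 0) by Cring. rewrite Cmod_0. lra.
  - rewrite <- (sum_if_le (fun i => ps k (g i) N0) Hle).
    rewrite <- (sum_if_le (fun i => ps k (w i) N0) Hle).
    rewrite <- sumC_minus, <- sumR_minus. apply Cmod_sum_le. intros i.
    specialize (Hc i). destruct (Nat.leb i N0).
    + apply IHk; auto.
    + rewrite zeroC, zeroR. rewrite Cminus0.
      rewrite Rminus_0_r. apply ps_norm; auto.
Qed.


Open Scope C_scope.

Definition conv (u : nat -> C) (l : C) : Prop :=
  forall eps : R, (0 < eps)%R -> exists N, forall n, (N <= n)%nat -> (Cmod (u n - l) < eps)%R.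

Lemma sqrt2_lt2 : (sqrt 2 < 2)%R.
Proof.
  rewrite <- (sqrt_square 2) at 2 by lra. apply sqrt_lt_1; lra.
Qed.

Lemma conv_filterlim (u : nat -> C) l : conv u l <-> filterlim u eventually (locally l).
Proof.
  split.
  - intros H P [eps HP]. destruct (H eps (cond_pos eps)) as [N HN].
    exists N. intros n Hn. apply HP. apply C_NormedModule_mixin_compat1. apply HN; auto.
  - intros H eps Heps.
    assert (Hp : (0 < eps / 2)%R) by lra.
    destruct (H (ball l (mkposreal _ Hp))) as [N HN].
    + exists (mkposreal _ Hp). auto.
    + exists N. intros n Hn. specialize (HN n Hn).
      apply C_NormedModule_mixin_compat2 in HN. simpl in HN.
      pose proof sqrt2_lt2. pose proof (sqrt_pos 2).
      change (minus (u n) l) with (u n - l) in HN. nra.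
Qed.

Lemma is_series_conv (a : nat -> C) l : is_series a l <-> conv (sum_n a) l.
Proof. rewrite conv_filterlim. reflexivity. Qed.

Lemma conv_unique u l1 l2 : conv u l1 -> conv u l2 -> l1 = l2.
Proof.
  intros H1 H2.
  assert (Hz : Cmod (l1 - l2) = 0%R).
  { destruct (Rle_lt_dec (Cmod (l1 - l2)) 0). pose proof (Cmod_ge_0 (l1 - l2)). lra.
  exfalso. set (e := Cmod (l1 - l2)) in *. assert (He : (0 < e/2)%R) by lra.
  destruct (H1 _ He) as [N1 HN1]. destruct (H2 _ He) as [N2 HN2].
  specialize (HN1 (N1 + N2)%nat ltac:(lia)). specialize (HN2 (N1 + N2)%nat ltac:(lia)).
  pose proof (Cmod_triangle (l1 - u (N1 + N2)%nat) (u (N1+N2)%nat - l2)) as H.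
  replace (l1 - u (N1 + N2)%nat + (u (N1 + N2)%nat - l2)) with (l1 - l2) in H by ring.
  rewrite <- Cmod_opp in HN1. replace (- (u (N1 + N2)%nat - l1)) with (l1 - u (N1 + N2)%nat) in HN1 by ring.
  fold e in H. lra. }
  apply Cmod_eq_0 in Hz. replace l1 with (l1 - l2 + l2) by ring. rewrite Hz. ring.
Qed.

Lemma sup_approx (V : nat -> R) B : (forall n, V n <= B)%R ->
  exists L, (forall n, V n <= L)%R /\ forall eps, (0 < eps)%R -> exists N, (L - eps < V N)%R.
Proof.
  intros HB. destruct (completeness (fun x => exists n, x = V n)) as [L [HL1 HL2]].
  - exists B. intros x [n ->]. auto.
  - exists (V O). eauto.
  - exists L. split. intros n. apply HL1. eauto.
    intros eps He. apply NNPP. intros Hn.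
    assert (L <= L - eps)%R. apply HL2. intros x [n ->].
    destruct (Rlt_le_dec (L - eps) (V n)); auto. exfalso; eauto. lra.
Qed.

Lemma conv_cauchy (u : nat -> C) (V : nat -> R) B :
  (forall n m, (n <= m)%nat -> Cmod (u m - u n) <= V m - V n)%R ->
  (forall n, V n <= B)%R -> exists l, conv u l.
Proof.
  intros Hc HB. destruct (sup_approx V HB) as [L [HL1 HL2]].
  assert (Hcau : forall eps, (0 < eps)%R -> exists N, forall n m, (N <= n)%nat -> (N <= m)%nat ->
     (Cmod (u m - u n) < eps)%R).
  { intros eps He. destruct (HL2 eps He) as [N HN]. exists N. intros n m Hn Hm.
    destruct (Nat.le_ge_cases n m) as [Hnm|Hnm].
    - pose proof (Hc n m Hnm). pose proof (Hc N n Hn). pose proof (Cmod_ge_0 (u n - u N)).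
      pose proof (HL1 m). lra.
    - rewrite <- Cmod_opp. replace (- (u m - u n)) with (u n - u m) by ring.
      pose proof (Hc m n ltac:(lia)). pose proof (Hc N m Hm). pose proof (Cmod_ge_0 (u m - u N)).
      pose proof (HL1 n). lra. }
  assert (exists y : C, filterlim u eventually (locally y)) as [y Hy].
  { apply (filterlim_locally_cauchy (U := C_CompleteNormedModule) (F := eventually) u).
    intros eps. destruct (Hcau eps (cond_pos eps)) as [N HN].
    exists (fun n => (N <= n)%nat). split. exists N; auto.
    intros n m Hn Hm. apply C_NormedModule_mixin_compat1. apply HN; auto. }
  exists y. now apply conv_filterlim.
Qed.

Lemma conv_le (u : nat -> C) l z B N0 :
  conv u l -> (forall n, (N0 <= n)%nat -> Cmod (u n - z) <= B)%R -> (Cmod (l - z) <= B)%R.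
Proof.
  intros Hu Hb. destruct (Rle_lt_dec (Cmod (l - z)) B) as [|Hlt]; auto. exfalso.
  destruct (Hu (Cmod (l - z) - B)%R ltac:(lra)) as [N HN].
  specialize (HN (N + N0)%nat ltac:(lia)). specialize (Hb (N + N0)%nat ltac:(lia)).
  pose proof (Cmod_triangle (l - u (N+N0)%nat) (u (N+N0)%nat - z)) as H.
  replace (l - u (N + N0)%nat + (u (N + N0)%nat - z)) with (l - z) in H by ring.
  rewrite <- Cmod_opp in HN. replace (- (u (N + N0)%nat - l)) with (l - u (N + N0)%nat) in HN by ring.
  lra.
Qed.

Lemma conv_plus u v lu lv : conv u lu -> conv v lv -> conv (fun n => u n + v n) (lu + lv).
Proof.
  intros Hu Hv eps He. destruct (Hu (eps/2)%R ltac:(lra)) as [N1 H1].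
  destruct (Hv (eps/2)%R ltac:(lra)) as [N2 H2]. exists (N1 + N2)%nat. intros n Hn.
  specialize (H1 n ltac:(lia)). specialize (H2 n ltac:(lia)).
  pose proof (Cmod_triangle (u n - lu) (v n - lv)).
  replace (u n + v n - (lu + lv)) with (u n - lu + (v n - lv)) by ring. lra.
Qed.

Lemma conv_scal c u l : conv u l -> conv (fun n => c * u n) (c * l).
Proof.
  intros Hu eps He. assert (Hc : (0 < Cmod c + 1)%R) by (pose proof (Cmod_ge_0 c); lra).
  destruct (Hu (eps / (Cmod c + 1))%R) as [N HN]. apply Rdiv_lt_0_compat; lra.
  exists N. intros n Hn. specialize (HN n Hn).
  replace (c * u n - c * l) with (c * (u n - l)) by ring. rewrite Cmod_mult.
  pose proof (Cmod_ge_0 c). pose proof (Cmod_ge_0 (u n - l)).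
  apply Rle_lt_trans with ((Cmod c + 1) * Cmod (u n - l))%R. nra.
  apply Rmult_lt_compat_l with (r := (Cmod c + 1)%R) in HN; auto.
  field_simplify in HN; lra.
Qed.

Lemma conv_const c : conv (fun _ => c) c.
Proof. intros eps He. exists O. intros. replace (c - c) with (RtoC 0) by ring. rewrite Cmod_0. lra. Qed.

Lemma conv_sum (u : nat -> nat -> C) (l : nat -> C) M :
  (forall j, conv (u j) (l j)) -> conv (fun N => sum_n (fun j => u j N) M) (sum_n l M).
Proof.
  intros H. induction M.
  - rewrite sum_O. intros eps He. destruct (H O eps He) as [N HN]. exists N. intros n Hn.
    rewrite sum_O. auto.
  - rewrite sumC_Sn. intros eps He. destruct (conv_plus IHM (H (S M)) He) as [N HN].
    exists N. intros n Hn. rewrite sumC_Sn. apply HN; auto.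
Qed.

Lemma conv_ext u v l N0 : (forall n, (N0 <= n)%nat -> u n = v n) -> conv u l -> conv v l.
Proof.
  intros He Hu eps Hp. destruct (Hu eps Hp) as [N HN]. exists (N + N0)%nat. intros n Hn.
  rewrite <- He by lia. apply HN; lia.
Qed.


Open Scope C_scope.

Lemma pown_S (a : C) n : pow_n a (S n) = a * pow_n a n. Proof. reflexivity. Qed.
Lemma pown_0 (a : C) : pow_n a 0 = RtoC 1. Proof. reflexivity. Qed.
Lemma Cmod_pown (a : C) n : Cmod (pow_n a n) = (Cmod a ^ n)%R.
Proof. induction n. simpl. apply Cmod_1. rewrite pown_S, Cmod_mult, IHn. simpl. ring. Qed.
Lemma pown_mult (a b : C) n : pow_n (a * b) n = pow_n a n * pow_n b n.
Proof. induction n. simpl. change (RtoC 1 = RtoC 1 * RtoC 1). Cring. rewrite !pown_S, IHn. Cring. Qed.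
Lemma pown_add (a : C) m n : pow_n a (m + n) = pow_n a m * pow_n a n.
Proof. induction m. simpl. change (pow_n a n = RtoC 1 * pow_n a n). Cring.
  rewrite Nat.add_succ_l, !pown_S, IHm. Cring. Qed.
Lemma pown_RtoC (q : R) n : pow_n (RtoC q) n = RtoC (q ^ n).
Proof. induction n. reflexivity. rewrite pown_S, IHn. simpl. now rewrite RtoC_mult. Qed.
Lemma Cmod_pown_le (a : C) (r : R) n : (Cmod a <= r)%R -> (Cmod (pow_n a n) <= r ^ n)%R.
Proof. intros H. rewrite Cmod_pown. apply pow_incr. split; auto. apply Cmod_ge_0. Qed.

Lemma fall2_refl {A} k (Rel : A -> A -> Prop) g : (forall u, Rel u u) -> fall2 k Rel g g.
Proof. induction k; simpl; auto. Qed.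

Lemma sumR_if_eq (u : nat -> R) m n :
  (m <= n)%nat -> sum_n (fun i => if Nat.eqb i m then u i else 0%R) n = u m.
Proof. exact (@sum_if_eq R_AbelianMonoid u m n). Qed.
Lemma sumC_if_eq (u : nat -> C) m n :
  (m <= n)%nat -> sum_n (fun i => if Nat.eqb i m then u i else RtoC 0) n = u m.
Proof. exact (@sum_if_eq C_AbelianMonoid u m n). Qed.
Lemma sumC_tail (u : nat -> C) N N' :
  (N <= N')%nat -> (forall j, (N < j)%nat -> u j = RtoC 0) -> sum_n u N' = sum_n u N.
Proof. exact (@sum_tail_zero C_AbelianMonoid u N N'). Qed.
Lemma sumC_zero n : sum_n (fun _ => RtoC 0) n = RtoC 0.
Proof. exact (@sum_zero_gen C_AbelianMonoid n). Qed.

Lemma ps_scalR k (g : fn k R) (c : R) N :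
  ps k (fmap2 k (fun u (_ : R) => u * c)%R g g) N = (ps k g N * c)%R.
Proof.
  apply (ps_map2 (fun u (_ : R) => u * c)%R). intros f h M. induction M.
  rewrite !sum_O; auto. rewrite !sumR_Sn, IHM. Rring.
Qed.
Lemma ps_scalC k (g : fn k C) (c : C) N :
  ps k (fmap2 k (fun u (_ : C) => c * u) g g) N = c * ps k g N.
Proof.
  apply (ps_map2 (fun u (_ : C) => c * u)). intros f h M. apply sumC_scal.
Qed.
Lemma ps_ext {G : AbelianMonoid} k (g h : fn k G) N : fall2 k eq g h -> ps k g N = ps k h N.
Proof. apply (ps_rel eq). intros. now apply sum_n_ext. Qed.

Section Fam.
Variable cf : coef7.

Definition tt7 (a b c d e x y : C) : fn 7 C :=
  fun i1 i2 i3 i4 i5 i6 i7 => cf i1 i2 i3 i4 i5 i6 i7 * pow_n a i1 * pow_n b i2 * pow_n c i3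
          * pow_n d i4 * pow_n e i5 * pow_n x i6 * pow_n y i7.
Definition ww7 (r : R) : fn 7 R :=
  fun i1 i2 i3 i4 i5 i6 i7 => (Cmod (cf i1 i2 i3 i4 i5 i6 i7) * r ^ (i1 + i2 + i3 + i4 + i5 + i6 + i7))%R.
Definition s5 (a b c d e : C) (j k : nat) : fn 5 C :=
  fun i1 i2 i3 i4 i5 => cf i1 i2 i3 i4 i5 j k * pow_n a i1 * pow_n b i2 * pow_n c i3
       * pow_n d i4 * pow_n e i5.
Definition v5 (r : R) (j k : nat) : fn 5 R :=
  fun i1 i2 i3 i4 i5 => (Cmod (cf i1 i2 i3 i4 i5 j k) * r ^ (i1 + i2 + i3 + i4 + i5))%R.

Lemma ww7_nonneg r : (0 <= r)%R -> fall2 7 (fun _ v => 0 <= v)%R (ww7 r) (ww7 r).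
Proof.
  intros Hr. simpl. intros. unfold ww7. apply Rmult_le_pos. apply Cmod_ge_0. apply pow_le; auto.
Qed.
Lemma v5_nonneg r j k : (0 <= r)%R -> fall2 5 (fun _ v => 0 <= v)%R (v5 r j k) (v5 r j k).
Proof.
  intros Hr. simpl. intros. unfold v5. apply Rmult_le_pos. apply Cmod_ge_0. apply pow_le; auto.
Qed.

Lemma pow_sum7 (r : R) i1 i2 i3 i4 i5 i6 i7 :
  (r ^ (i1 + i2 + i3 + i4 + i5 + i6 + i7) = r^i1 * r^i2 * r^i3 * r^i4 * r^i5 * r^i6 * r^i7)%R.
Proof. rewrite !pow_add. ring. Qed.
Lemma pow_sum5 (r : R) i1 i2 i3 i4 i5 :
  (r ^ (i1 + i2 + i3 + i4 + i5) = r^i1 * r^i2 * r^i3 * r^i4 * r^i5)%R.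
Proof. rewrite !pow_add. ring. Qed.

Lemma tt7_le r a b c d e x y :
  (Cmod a <= r)%R -> (Cmod b <= r)%R -> (Cmod c <= r)%R -> (Cmod d <= r)%R ->
  (Cmod e <= r)%R -> (Cmod x <= r)%R -> (Cmod y <= r)%R ->
  fall2 7 (fun u v => Cmod u <= v)%R (tt7 a b c d e x y) (ww7 r).
Proof.
  intros. simpl. intros. unfold tt7, ww7. rewrite pow_sum7. rewrite !Cmod_mult.
  pose proof (Cmod_ge_0 (cf i i0 i1 i2 i3 i4 i5)).
  repeat match goal with |- context [Cmod (pow_n ?z ?n)] =>
    let H := fresh in let H' := fresh in assert (H := Cmod_pown_le z n ltac:(eassumption));
    assert (H' := Cmod_ge_0 (pow_n z n)); revert H H'; generalize (Cmod (pow_n z n)); intros end.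
  repeat rewrite <- Rmult_assoc.
  repeat apply Rmult_le_compat; auto; repeat apply Rmult_le_pos; auto; lra.
Qed.

Lemma s5_le r a b c d e j k :
  (Cmod a <= r)%R -> (Cmod b <= r)%R -> (Cmod c <= r)%R -> (Cmod d <= r)%R ->
  (Cmod e <= r)%R -> fall2 5 (fun u v => Cmod u <= v)%R (s5 a b c d e j k) (v5 r j k).
Proof.
  intros. simpl. intros. unfold s5, v5. rewrite pow_sum5. rewrite !Cmod_mult.
  pose proof (Cmod_ge_0 (cf i i0 i1 i2 i3 j k)).
  repeat match goal with |- context [Cmod (pow_n ?z ?n)] =>
    let H := fresh in let H' := fresh in assert (H := Cmod_pown_le z n ltac:(eassumption));
    assert (H' := Cmod_ge_0 (pow_n z n)); revert H H'; generalize (Cmod (pow_n z n)); intros end.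
  repeat rewrite <- Rmult_assoc.
  repeat apply Rmult_le_compat; auto; repeat apply Rmult_le_pos; auto; lra.
Qed.
End Fam.


Open Scope C_scope.

Lemma taylor_conv cf a b c d e j k v :
  taylor_xy_is cf a b c d e j k v <-> conv (fun N => ps 5 (s5 cf a b c d e j k) N) v.
Proof. rewrite conv_filterlim. reflexivity. Qed.

Lemma analytic_conv cf r f a b c d e x y : analytic7_rep cf r f ->
  (Cmod a < r)%R -> (Cmod b < r)%R -> (Cmod c < r)%R -> (Cmod d < r)%R ->
  (Cmod e < r)%R -> (Cmod x < r)%R -> (Cmod y < r)%R ->
  conv (fun N => ps 7 (tt7 cf a b c d e x y) N) (f a b c d e x y).
Proof.
  intros [_ [_ H]] ? ? ? ? ? ? ?. rewrite conv_filterlim. apply H; auto.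
Qed.

Lemma analytic_bound cf r f : analytic7_rep cf r f ->
  exists M, forall N, (ps 7 (ww7 cf r) N <= M)%R.
Proof. intros [_ [[M H] _]]. exists M. exact H. Qed.

Section Slice.
Variables (cf : coef7) (r M : R).
Hypothesis Hr : (0 < r)%R.
Hypothesis HM : forall N, (ps 7 (ww7 cf r) N <= M)%R.

Lemma slice_bound j k N : (ps 5 (v5 cf r j k) N * r ^ (j + k) <= M)%R.
Proof.
  set (N' := (N + j + k)%nat).
  assert (Hr0 : (0 <= r ^ (j+k))%R) by (apply pow_le; lra).
  apply Rle_trans with (ps 5 (v5 cf r j k) N' * r ^ (j + k))%R.
  { apply Rmult_le_compat_r; auto. apply ps_mono. apply v5_nonneg; lra. unfold N'; lia. }
  rewrite <- ps_scalR.
  set (sl := fun i1 i2 i3 i4 i5 i6 i7 : nat =>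
     if Nat.eqb i6 j then if Nat.eqb i7 k then ww7 cf r i1 i2 i3 i4 i5 i6 i7 else 0%R else 0%R).
  apply Rle_trans with (ps 7 sl N').
  - apply Req_le. change (ps 7 sl N') with
      (ps 5 (fun i1 i2 i3 i4 i5 => sum_n (fun i6 => sum_n (fun i7 => sl i1 i2 i3 i4 i5 i6 i7) N') N') N').
    apply ps_ext. simpl. intros i1 i2 i3 i4 i5. unfold sl.
    rewrite (sum_n_ext _ (fun i6 => if Nat.eqb i6 j then
         sum_n (fun i7 => if Nat.eqb i7 k then ww7 cf r i1 i2 i3 i4 i5 i6 i7 else 0%R) N' else 0%R)).
    2: { intros i6. destruct (Nat.eqb i6 j). auto. rewrite <- zeroR. apply sum_zero_gen. }
    rewrite sumR_if_eq by (unfold N'; lia). rewrite sumR_if_eq by (unfold N'; lia).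
    unfold ww7, v5. rewrite !pow_add. ring.
  - apply Rle_trans with (ps 7 (ww7 cf r) N'); auto. apply ps_le.
    simpl. intros. unfold sl. pose proof (ww7_nonneg cf (Rlt_le _ _ Hr)) as H. simpl in H.
    specialize (H i i0 i1 i2 i3 i4 i5).
    destruct (Nat.eqb i4 j); destruct (Nat.eqb i5 k); lra.
Qed.

Lemma taylor_ex a b c d e j k :
  (Cmod a <= r)%R -> (Cmod b <= r)%R -> (Cmod c <= r)%R -> (Cmod d <= r)%R -> (Cmod e <= r)%R ->
  exists A, conv (fun N => ps 5 (s5 cf a b c d e j k) N) A /\ (Cmod A * r ^ (j + k) <= M)%R.
Proof.
  intros Ha Hb Hc Hd He.
  assert (Hp : (0 < r ^ (j + k))%R) by (apply pow_lt; lra).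
  assert (HV : forall N, (ps 5 (v5 cf r j k) N <= M / r ^ (j + k))%R).
  { intros N. pose proof (slice_bound j k N). apply Rmult_le_reg_r with (r ^ (j+k))%R; auto.
    field_simplify; lra. }
  destruct (@conv_cauchy (fun N => ps 5 (s5 cf a b c d e j k) N) (fun N => ps 5 (v5 cf r j k) N)
     (M / r ^ (j + k))%R) as [A HA]; auto.
  { intros n m Hnm. apply sandwich; auto. apply s5_le; auto. apply fall2_refl; auto. }
  exists A. split; auto.
  assert (Cmod (A - 0) <= M / r ^ (j + k))%R.
  { apply (@conv_le _ _ _ _ O HA). intros n _. replace (ps 5 (s5 cf a b c d e j k) n - 0)
     with (ps 5 (s5 cf a b c d e j k) n) by Cring.
    eapply Rle_trans. apply ps_norm. apply s5_le; eauto. auto. }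
  replace (A - 0) with A in H by Cring.
  apply Rmult_le_reg_r with (/ r ^ (j + k))%R. apply Rinv_0_lt_compat; auto.
  field_simplify; try lra.
Qed.
End Slice.


Open Scope C_scope.

Definition Acoef (cf : coef7) (a b c d e : C) (j k : nat) : C :=
  epsilon (inhabits (RtoC 0)) (fun v => taylor_xy_is cf a b c d e j k v).

Lemma Acoef_unique cf a b c d e j k v : taylor_xy_is cf a b c d e j k v -> Acoef cf a b c d e j k = v.
Proof.
  intros H. assert (H2 : taylor_xy_is cf a b c d e j k (Acoef cf a b c d e j k)).
  { unfold Acoef. apply epsilon_spec. eauto. }
  rewrite taylor_conv in H, H2. eapply conv_unique; eauto.
Qed.

Definition Pn (cf : coef7) (a b c d e : C) (n : nat) (x y : C) : C :=
  sum_n (fun k => Acoef cf a b c d e (n - k) k * pow_n x (n - k) * pow_n y k) n.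

Lemma tri_tail (T : nat -> nat -> C) N N' : (N <= N')%nat ->
  sum_n (fun j => sum_n (fun k => if Nat.leb (j + k) N then T j k else RtoC 0) N') N' =
  sum_n (fun j => sum_n (fun k => if Nat.leb (j + k) N then T j k else RtoC 0) N) N.
Proof.
  intros H. rewrite (sumC_tail _ H).
  - apply sum_n_ext_loc. intros j Hj. apply sumC_tail; auto.
    intros k Hk. destruct (Nat.leb_spec (j + k) N); auto; lia.
  - intros j Hj. transitivity (sum_n (fun _ => RtoC 0) N'); [|apply sumC_zero].
    apply sum_n_ext. intros k. destruct (Nat.leb_spec (j + k) N); auto; lia.
Qed.

Lemma tri_diag (g : nat -> nat -> C) N :
  sum_n (fun j => sum_n (fun k => if Nat.leb (j + k) N then g j k else RtoC 0) N) N =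
  sum_n (fun n => sum_n (fun k => g (n - k)%nat k) n) N.
Proof.
  induction N.
  - rewrite !sum_O. reflexivity.
  - rewrite (sumC_Sn (fun n => sum_n (fun k => g (n - k)%nat k) n)). rewrite <- IHN.
    rewrite (sum_n_ext _ (fun j => sum_n (fun k => (if Nat.leb (j + k) N then g j k else RtoC 0)
        + (if Nat.eqb (j + k) (S N) then g j k else RtoC 0)) (S N))).
    2: { intros j. apply sum_n_ext. intros k.
         destruct (Nat.leb_spec (j + k) (S N)); destruct (Nat.leb_spec (j + k) N);
         destruct (Nat.eqb_spec (j + k) (S N)); try lia; Cring. }
    rewrite (sum_n_ext _ (fun j => sum_n (fun k => if Nat.leb (j + k) N then g j k else RtoC 0) (S N)
       + sum_n (fun k => if Nat.eqb (j + k) (S N) then g j k else RtoC 0) (S N))).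
    2: { intros j. apply sumC_plus. }
    rewrite sumC_plus. rewrite tri_tail by lia. f_equal.
    rewrite sum_n_switch. apply sum_n_ext_loc. intros k Hk.
    rewrite <- (@sumC_if_eq (fun j => g j k) (S N - k)%nat (S N)) by lia.
    apply sum_n_ext. intros j. destruct (Nat.eqb_spec (j + k) (S N)); destruct (Nat.eqb_spec j (S N - k)%nat);
      try lia; auto.
Qed.

Definition cjk (x y : C) (N j k : nat) : C :=
  if Nat.leb (j + k) N then pow_n x j * pow_n y k else RtoC 0.

Section Diag.
Variables (cf : coef7) (r M : R) (f : C -> C -> C -> C -> C -> C -> C -> C).
Hypothesis Hr : (0 < r)%R.
Hypothesis HM : forall N, (ps 7 (ww7 cf r) N <= M)%R.
Hypothesis hf : analytic7_rep cf r f.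
Variables (a b c d e x y : C).
Hypotheses (Ha : (Cmod a < r)%R) (Hb : (Cmod b < r)%R) (Hc : (Cmod c < r)%R)
  (Hd : (Cmod d < r)%R) (He : (Cmod e < r)%R) (Hx : (Cmod x < r)%R) (Hy : (Cmod y < r)%R).

Let t := tt7 cf a b c d e x y.
Let w := ww7 cf r.
Definition dm (N : nat) : fn 7 C :=
  fun i1 i2 i3 i4 i5 i6 i7 => if Nat.leb (i6 + i7) N then tt7 cf a b c d e x y i1 i2 i3 i4 i5 i6 i7 else RtoC 0.

Lemma Htw : fall2 7 (fun u v => Cmod u <= v)%R t w.
Proof. apply tt7_le; lra. Qed.

Lemma step_a N N' L : (N <= N')%nat -> (forall n, ps 7 w n <= L)%R ->
  (Cmod (ps 7 (dm N) N' - ps 7 t (N / 2)) <= L - ps 7 w (N / 2))%R.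
Proof.
  intros H HL. eapply Rle_trans. apply sandwich.
  - apply Nat.le_trans with N; auto. apply Nat.Div0.div_le_upper_bound; lia.
  - pose proof Htw as Ht. pose proof (ww7_nonneg cf (Rlt_le _ _ Hr)) as Hw.
    cbn [fall2] in *. intros i1 i2 i3 i4 i5 i6 i7. unfold dm. destruct (Nat.leb (i6 + i7) N). apply Ht.
    rewrite Cmod_0. apply Hw.
  - cbn [fall2 cut].
    repeat (let i := fresh "i" in let E := fresh "E" in intro i; destruct (Nat.leb i (N / 2)%nat) eqn:E;
      cbn beta iota; [ | reflexivity ]).
    unfold dm. destruct (Nat.leb_spec (i4 + i5) N); auto.
    apply Nat.leb_le in E4. apply Nat.leb_le in E5. exfalso.
    assert (2 * (N / 2) <= N)%nat by (apply Nat.Div0.mul_div_le; lia). lia.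
  - specialize (HL N'). unfold w in *. match goal with |- (?A - ?B <= _)%R => change A with (ps 7 (ww7 cf r) N'); change B with (ps 7 (ww7 cf r) (N/2)%nat) end. lra.
Qed.

Lemma step_b N N' : (N <= N')%nat ->
  ps 7 (dm N) N' = sum_n (fun j => sum_n (fun k => cjk x y N j k * ps 5 (s5 cf a b c d e j k) N') N) N.
Proof.
  intros H.
  change (ps 7 (dm N) N') with (ps 5 (fun i1 i2 i3 i4 i5 =>
     sum_n (fun i6 => sum_n (fun i7 => dm N i1 i2 i3 i4 i5 i6 i7) N') N') N').
  rewrite (@ps_ext C_AbelianMonoid 5 _ (fsum 5 (fun j => fsum 5 (fun k =>
      fmap2 5 (fun u (_ : C) => cjk x y N j k * u) (s5 cf a b c d e j k) (s5 cf a b c d e j k)) N) N)).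
  - rewrite ps_fsum. apply sum_n_ext. intros j. rewrite ps_fsum. apply sum_n_ext. intros k.
    apply ps_scalC.
  - cbn [fall2 fsum fmap2]. intros. unfold dm. rewrite tri_tail by auto.
    apply sum_n_ext. intros j. apply sum_n_ext. intros k. unfold cjk.
    destruct (Nat.leb (j + k) N). unfold tt7, s5. Cring. Cring.
Qed.

Lemma Acoef_conv j k : conv (fun N => ps 5 (s5 cf a b c d e j k) N) (Acoef cf a b c d e j k).
Proof.
  destruct (taylor_ex Hr HM a b c d e j k) as [A [HA _]]; try lra.
  rewrite (@Acoef_unique cf a b c d e j k A); auto. now apply taylor_conv.
Qed.

Definition Tri (N : nat) : C :=
  sum_n (fun j => sum_n (fun k => cjk x y N j k * Acoef cf a b c d e j k) N) N.

Lemma step_c N : conv (fun N' => ps 7 (dm N) N') (Tri N).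
Proof.
  apply (@conv_ext (fun N' => sum_n (fun j => sum_n (fun k => cjk x y N j k * ps 5 (s5 cf a b c d e j k) N') N) N) _ _ N).
  { intros n Hn. symmetry. apply step_b; auto. }
  apply (conv_sum (fun j N' => sum_n (fun k => cjk x y N j k * ps 5 (s5 cf a b c d e j k) N') N)).
  intros j. apply (conv_sum (fun k N' => cjk x y N j k * ps 5 (s5 cf a b c d e j k) N')).
  intros k. apply conv_scal. apply Acoef_conv.
Qed.

Lemma step_d N : Tri N = sum_n (fun n => Pn cf a b c d e n x y) N.
Proof.
  unfold Tri, Pn. rewrite <- (tri_diag (fun j k => Acoef cf a b c d e j k * pow_n x j * pow_n y k)). apply sum_n_ext. intros j. apply sum_n_ext. intros k.
  unfold cjk. destruct (Nat.leb (j + k) N); Cring.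
Qed.

Theorem diag_rep : is_series (fun n => Pn cf a b c d e n x y) (f a b c d e x y).
Proof.
  apply is_series_conv.
  pose proof (analytic_conv a b c d e x y hf Ha Hb Hc Hd He Hx Hy) as Hf.
  destruct (@sup_approx (fun n => ps 7 w n) M HM) as [L [HL1 HL2]].
  assert (Hbd : forall N, (Cmod (Tri N - f a b c d e x y) <=
      (L - ps 7 w (N / 2)%nat) + Cmod (ps 7 t (N / 2)%nat - f a b c d e x y))%R).
  { intros N. apply (@conv_le _ _ _ _ N (step_c N)). intros N' HN'.
    pose proof (step_a HN' HL1) as H0.
    pose proof (Cmod_triangle (ps 7 (dm N) N' - ps 7 t (N / 2)%nat) (ps 7 t (N / 2)%nat - f a b c d e x y)) as H1.
    replace (ps 7 (dm N) N' - ps 7 t (N / 2)%nat + (ps 7 t (N / 2)%nat - f a b c d e x y))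
      with (ps 7 (dm N) N' - f a b c d e x y) in H1 by Cring.
    lra. }
  intros eps Heps.
  destruct (HL2 (eps / 2)%R ltac:(lra)) as [K1 HK1].
  destruct (Hf (eps / 2)%R ltac:(lra)) as [K2 HK2].
  exists (2 * (K1 + K2))%nat. intros N HN.
  assert (Hh : (K1 + K2 <= N / 2)%nat).
  { apply Nat.le_trans with ((2 * (K1 + K2)) / 2)%nat.
    rewrite Nat.mul_comm, Nat.div_mul; lia. apply Nat.Div0.div_le_mono; auto. }
  rewrite <- step_d.
  eapply Rle_lt_trans. apply Hbd.
  assert (ps 7 w K1 <= ps 7 w (N / 2)%nat)%R.
  { apply ps_mono. apply ww7_nonneg; lra. lia. }
  specialize (HK2 (N / 2)%nat ltac:(lia)). unfold t, w in *. lra.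
Qed.
End Diag.


Open Scope C_scope.

Lemma geom_tail (q : R) m d : (0 <= q <= 1/2)%R ->
  (sum_n (fun n => if Nat.leb n m then 0%R else q ^ n)%R (m + d) <= 2 * q ^ (m + 1) - 2 * q ^ (m + d + 1))%R.
Proof.
  intros Hq. induction d.
  - rewrite Nat.add_0_r. rewrite (sum_n_ext_loc _ (fun _ => 0%R)).
    rewrite <- zeroR, sum_zero_gen, zeroR. lra.
    intros n Hn. destruct (Nat.leb_spec n m); auto; lia.
  - rewrite Nat.add_succ_r, sumR_Sn. destruct (Nat.leb_spec (S (m + d)) m); try lia.
    replace (m + S d + 1)%nat with (S (m + d + 1)) by lia.
    replace (S (m + d)) with (m + d + 1)%nat by lia. simpl pow.
    pose proof (pow_le q (m + d + 1) ltac:(lra)). assert (Hp : (q ^ (m + d + 1 + 1) = q * q ^ (m + d + 1))%R) by (rewrite (Nat.add_1_r (m+d+1)); simpl; ring). rewrite Hp. nra.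
Qed.

Lemma sumC_if_le (u : nat -> C) N0 N1 :
  (N0 <= N1)%nat -> sum_n (fun i => if Nat.leb i N0 then u i else RtoC 0) N1 = sum_n u N0.
Proof. exact (@sum_if_le C_AbelianMonoid u N0 N1). Qed.

Lemma sumC_first (u : nat -> C) m : (forall i, (i < m)%nat -> u i = RtoC 0) -> sum_n u m = u m.
Proof.
  intros H. rewrite <- (@sumC_if_eq u m m) by lia. apply sum_n_ext_loc. intros n Hn.
  destruct (Nat.eqb_spec n m). subst; auto. apply H; lia.
Qed.

Lemma series_unique (b : nat -> C) (rho : R) : (0 < rho)%R ->
  (forall t : C, (Cmod t < rho)%R -> is_series (fun n => b n * pow_n t n) (RtoC 0)) ->
  forall n, b n = RtoC 0.
Proof.
  intros Hrho Hs.
  set (t0 := (rho / 2)%R).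
  assert (Ht0 : (0 < t0)%R) by (unfold t0; lra).
  assert (HK : exists K, (0 <= K)%R /\ forall n, (Cmod (b n) * t0 ^ n <= K)%R).
  { assert (Hc : is_series (fun n => b n * pow_n (RtoC t0) n) (RtoC 0)).
    { apply Hs. rewrite Cmod_R, Rabs_pos_eq; unfold t0; lra. }
    destruct (filterlim_bounded (fun N => sum_n (fun n => b n * pow_n (RtoC t0) n) N)) as [B HB].
    { exists (RtoC 0). exact Hc. }
    assert (HB' : forall n, (Cmod (sum_n (fun n => (b n * pow_n (RtoC t0) n)%C) n) <= B)%R) by (intros; apply HB).
    clear HB. rename HB' into HB.
    exists (2 * B)%R. assert (0 <= B)%R. { specialize (HB O). 
      pose proof (Cmod_ge_0 (sum_n (fun n => b n * pow_n (RtoC t0) n) 0)). lra. }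
    split. lra. intros n.
    assert (Ht : (Cmod (b n) * t0 ^ n)%R = Cmod (b n * pow_n (RtoC t0) n)).
    { rewrite Cmod_mult, Cmod_pown, Cmod_R, Rabs_pos_eq; lra. }
    rewrite Ht. destruct n.
    - specialize (HB O). rewrite sum_O in HB. lra.
    - pose proof (HB (S n)) as H1. pose proof (HB n) as H2. 
      rewrite sumC_Sn in H1.
      set (X := sum_n (fun n0 => b n0 * pow_n (RtoC t0) n0) n) in *.
      set (Y := b (S n) * pow_n (RtoC t0) (S n)) in *.
      replace Y with ((X + Y) + - X) by Cring.
      eapply Rle_trans. apply Cmod_triangle. rewrite Cmod_opp. lra. }
  destruct HK as [K [HK0 HK]].
  intros n. induction n as [m IH] using (well_founded_induction Wf_nat.lt_wf).
  assert (Hest : forall q : R, (0 < q <= 1/2)%R -> (Cmod (b m) * t0 ^ m <= 2 * K * q)%R).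
  { intros q Hq. set (s := (t0 * q)%R).
    assert (Hs0 : (0 < s)%R) by (unfold s; nra).
    assert (Hser : is_series (fun n => b n * pow_n (RtoC s) n) (RtoC 0)).
    { apply Hs. rewrite Cmod_R, Rabs_pos_eq by lra. unfold s, t0 in *. nra. }
    apply is_series_conv in Hser.
    set (z := b m * pow_n (RtoC s) m).
    assert (Hz : (Cmod (RtoC 0 - z) <= 2 * K * q ^ (m + 1))%R).
    { apply (@conv_le _ _ _ _ m Hser). intros N HN.
      replace N with (m + (N - m))%nat by lia. set (d := (N - m)%nat).
      assert (Hsplit : sum_n (fun n => b n * pow_n (RtoC s) n) (m + d) =
         sum_n (fun i => if Nat.leb i m then b i * pow_n (RtoC s) i else RtoC 0) (m + d)
         + sum_n (fun i => if Nat.leb i m then RtoC 0 else b i * pow_n (RtoC s) i) (m + d)).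
      { rewrite <- sumC_plus. apply sum_n_ext. intros i. destruct (Nat.leb i m); Cring. }
      rewrite Hsplit.
      rewrite (@sumC_if_le (fun n => b n * pow_n (RtoC s) n) m (m + d)) by lia.
      rewrite sumC_first.
      2: { intros i Hi. rewrite IH by auto. Cring. }
      fold z. replace (z + sum_n (fun i => if Nat.leb i m then RtoC 0 else b i * pow_n (RtoC s) i) (m + d) - z)
        with (sum_n (fun i => if Nat.leb i m then RtoC 0 else b i * pow_n (RtoC s) i) (m + d)) by Cring.
      eapply Rle_trans. apply (Cmod_sum_le _ (fun i => K * (if Nat.leb i m then 0%R else q ^ i))%R).
      { intros i. destruct (Nat.leb i m). rewrite Cmod_0; lra.
        rewrite Cmod_mult, Cmod_pown, Cmod_R, Rabs_pos_eq by lra.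
        specialize (HK i). unfold s. rewrite Rpow_mult_distr.
        pose proof (pow_le q i ltac:(lra)). rewrite <- Rmult_assoc. apply Rmult_le_compat_r; auto. }
      assert (Hsc : forall (u : nat -> R) N, sum_n (fun i => K * u i)%R N = (K * sum_n u N)%R).
      { intros u N0. induction N0. rewrite !sum_O; auto. rewrite !sumR_Sn, IHN0. Rring. }
      rewrite Hsc. pose proof (geom_tail m d (conj (Rlt_le _ _ (proj1 Hq)) (proj2 Hq))).
      pose proof (pow_le q (m + d + 1) ltac:(lra)). apply Rle_trans with (K * (2 * q ^ (m + 1) - 2 * q ^ (m + d + 1)))%R. apply Rmult_le_compat_l; auto. nra. }
    replace (RtoC 0 - z) with (- z) in Hz by Cring. rewrite Cmod_opp in Hz.
    unfold z in Hz. rewrite Cmod_mult, Cmod_pown, Cmod_R, Rabs_pos_eq in Hz by lra.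
    unfold s in Hz. rewrite Rpow_mult_distr in Hz. rewrite pow_add in Hz. simpl pow in Hz.
    pose proof (pow_lt q m ltac:(lra)). pose proof (Cmod_ge_0 (b m)). pose proof (pow_lt t0 m Ht0).
    apply Rmult_le_reg_r with (q ^ m)%R; auto. nra. }
  destruct (classic (b m = RtoC 0)) as [|Hne]; auto. exfalso.
  apply Cmod_gt_0 in Hne. set (beta := (Cmod (b m) * t0 ^ m)%R).
  assert (Hb0 : (0 < beta)%R) by (unfold beta; pose proof (pow_lt t0 m Ht0); nra).
  set (q := Rmin (1/2) (beta / (4 * K + 4))).
  assert (Hq : (0 < q <= 1/2)%R).
  { unfold q. split. apply Rmin_glb_lt. lra. apply Rdiv_lt_0_compat; lra. apply Rmin_l. }
  specialize (Hest q Hq). fold beta in Hest.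
  assert (q <= beta / (4 * K + 4))%R by apply Rmin_r.
  assert (q * (4 * K + 4) <= beta)%R.
  { apply Rmult_le_reg_r with (/ (4 * K + 4))%R. apply Rinv_0_lt_compat; lra.
    field_simplify; try lra. }
  nra.
Qed.


Open Scope C_scope.

Section Alg.
Variables (q : R) (a b c d e : C).
Let Q := RtoC q.

Definition OpL (G : C -> C -> C) (x y : C) : C :=
  x * (G x y - G x (y * Q)
       - (d + e) / Q * (G x (y * Q) - G x (y * Q * Q))
       + d * e / (Q * Q) * (G x (y * Q * Q) - G x (y * Q * Q * Q))).
Definition OpR (G : C -> C -> C) (x y : C) : C :=
  y * ((G x y - G (x * Q) y)
         - (a + b + c) * (G x (y * Q) - G (x * Q) (y * Q))
         + (a * b + a * c + b * c) * (G x (y * Q * Q) - G (x * Q) (y * Q * Q))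
         - a * b * c * (G x (y * Q * Q * Q) - G (x * Q) (y * Q * Q * Q))).
Definition Op G x y := OpL G x y - OpR G x y.

Lemma qeq_Op f x y : qeq q f a b c d e x y <-> Op (f a b c d e) x y = RtoC 0.
Proof.
  unfold qeq, Op. fold Q. change (OpL (f a b c d e) x y = OpR (f a b c d e) x y <-> OpL (f a b c d e) x y - OpR (f a b c d e) x y = RtoC 0).
  split. intros ->. ring. intros H. replace (OpL (f a b c d e) x y) with (OpL (f a b c d e) x y - OpR (f a b c d e) x y + OpR (f a b c d e) x y) by ring.
  rewrite H. ring.
Qed.

Lemma Op_ext G G' x y : (forall X Y, G X Y = G' X Y) -> Op G x y = Op G' x y.
Proof. intros H. unfold Op, OpL, OpR. rewrite !H. reflexivity. Qed.

Lemma Op_plus G G1 G2 x y : (forall X Y, G X Y = G1 X Y + G2 X Y) -> Op G x y = Op G1 x y + Op G2 x y.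
Proof. intros H. unfold Op, OpL, OpR. rewrite !H. ring. Qed.

Lemma Op_sum (g : nat -> C -> C -> C) n x y :
  Op (fun X Y => sum_n (fun k => g k X Y) n) x y = sum_n (fun k => Op (g k) x y) n.
Proof.
  induction n.
  - rewrite sum_O. apply Op_ext. intros; apply sum_O.
  - rewrite sumC_Sn, <- IHn. apply Op_plus. intros. apply sumC_Sn.
Qed.

Definition ell (k : nat) : C :=
  let Qk := pow_n Q k in
  (1 - Qk) - (d + e) / Q * (Qk - Qk * Qk) + d * e / (Q * Q) * (Qk * Qk - Qk * Qk * Qk).
Definition rho (j k : nat) : C :=
  let Qk := pow_n Q k in
  (1 - pow_n Q j) * (1 - (a + b + c) * Qk + (a * b + a * c + b * c) * (Qk * Qk) - a * b * c * (Qk * Qk * Qk)).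

Lemma Op_mono (A : C) j k x y :
  Op (fun X Y => A * pow_n X j * pow_n Y k) x y = A * pow_n x j * pow_n y k * (x * ell k - y * rho j k).
Proof.
  unfold Op, OpL, OpR, ell, rho. cbv zeta. rewrite !pown_mult. Cring.
Qed.

Definition Eterm (A : nat -> nat -> C) (x y : C) (n k : nat) : C :=
  A (n - k)%nat k * pow_n x (n - k) * pow_n y k * (x * ell k - y * rho (n - k) k).
Definition En (A : nat -> nat -> C) (x y : C) (n : nat) : C := sum_n (Eterm A x y n) n.

Lemma Op_P (A : nat -> nat -> C) n x y :
  Op (fun X Y => sum_n (fun k => A (n - k)%nat k * pow_n X (n - k) * pow_n Y k) n) x y = En A x y n.
Proof.
  rewrite (Op_sum (fun k X Y => A (n - k)%nat k * pow_n X (n - k) * pow_n Y k)).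
  apply sum_n_ext. intros k. apply Op_mono.
Qed.

Lemma En_homog A n (t u v : C) : En A (t * u) (t * v) n = pow_n t (S n) * En A u v n.
Proof.
  unfold En. rewrite <- sumC_scal. apply sum_n_ext_loc. intros k Hk. unfold Eterm.
  rewrite !pown_mult. rewrite pown_S.
  replace (pow_n t n) with (pow_n t (n - k) * pow_n t k).
  Cring. rewrite <- pown_add. f_equal. lia.
Qed.

Lemma telescope (al be : nat -> C) n : al O = RtoC 0 -> be n = RtoC 0 ->
  (forall k, (k < n)%nat -> al (S k) = be k) -> sum_n (fun k => al k - be k) n = RtoC 0.
Proof.
  intros H0 Hn Hs. rewrite sumC_minus. destruct n.
  - rewrite !sum_O, H0, Hn. Cring.
  - rewrite (@sum_shift C_AbelianMonoid al n). rewrite plusC, H0.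
    rewrite (sum_n_ext_loc _ be). rewrite sumC_Sn, Hn. Cring.
    intros k Hk. apply Hs. lia.
Qed.

Lemma ell0 : ell O = RtoC 0.
Proof. unfold ell. cbv zeta. rewrite pown_0. Cring. Qed.
Lemma rho0 k : rho O k = RtoC 0.
Proof. unfold rho. cbv zeta. rewrite pown_0. Cring. Qed.

Lemma En_zero A n x y :
  (forall k, (k < n)%nat -> A (n - S k)%nat (S k) * ell (S k) = A (n - k)%nat k * rho (n - k) k) ->
  En A x y n = RtoC 0.
Proof.
  intros Hrec. unfold En.
  rewrite (sum_n_ext _ (fun k => A (n - k)%nat k * pow_n x (n - k) * pow_n y k * x * ell k
         - A (n - k)%nat k * pow_n x (n - k) * pow_n y k * y * rho (n - k) k)).
  2: { intros k. unfold Eterm. Cring. }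
  apply (telescope (fun k => A (n - k)%nat k * pow_n x (n - k) * pow_n y k * x * ell k)
                   (fun k => A (n - k)%nat k * pow_n x (n - k) * pow_n y k * y * rho (n - k) k)).
  - rewrite ell0. Cring.
  - rewrite Nat.sub_diag, rho0. Cring.
  - intros k Hk. cbv beta.
    replace (pow_n x (n - k)) with (pow_n x (n - S k) * x).
    2: { replace (n - k)%nat with (S (n - S k)) by lia. rewrite pown_S. Cring. }
    rewrite pown_S.
    transitivity (A (n - S k)%nat (S k) * ell (S k) * pow_n x (n - S k) * x * pow_n y k * y). Cring.
    rewrite Hrec by auto. Cring.
Qed.
End Alg.


Open Scope C_scope.

Lemma RtoC_nz (s : R) : s <> 0%R -> RtoC s <> RtoC 0.
Proof. intros H E. apply (f_equal fst) in E. simpl in E. auto. Qed.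

Lemma one_minus_nz (al : C) (s : R) : (Cmod al * Rabs s < 1)%R -> RtoC 1 - al * RtoC s <> RtoC 0.
Proof.
  intros H E. assert (al * RtoC s = RtoC 1).
  { replace (al * RtoC s) with (RtoC 1 - (RtoC 1 - al * RtoC s)) by ring. rewrite E. ring. }
  apply (f_equal Cmod) in H0. rewrite Cmod_mult, Cmod_R, Cmod_1 in H0. lra.
Qed.

Lemma Cmult_reg (x y l : C) : l <> RtoC 0 -> x * l = y * l -> x = y.
Proof.
  intros Hl H. replace x with (x * l * / l) by (field; auto). rewrite H. field; auto.
Qed.

Section Phi.
Variables (q : R) (a b c d e : C).
Hypotheses (hq0 : (0 < q)%R) (hq1 : (q < 1)%R) (hd : (Cmod d < 1)%R) (he : (Cmod e < 1)%R).
Let Q := RtoC q.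

Lemma Qnz : Q <> RtoC 0. Proof. apply RtoC_nz. lra. Qed.

Lemma qpow_bound m : (Rabs (q ^ m) <= 1)%R.
Proof. rewrite Rabs_pos_eq. rewrite <- (pow1 m). apply pow_incr. lra. apply pow_le. lra. Qed.

Lemma fac_nz (al : C) m : (Cmod al < 1)%R -> RtoC 1 - al * RtoC (q ^ m) <> RtoC 0.
Proof.
  intros H. apply one_minus_nz. pose proof (qpow_bound m). pose proof (Cmod_ge_0 al).
  pose proof (Rabs_pos (q ^ m)). nra.
Qed.

Lemma CmodQ : (Cmod Q < 1)%R.
Proof. unfold Q. rewrite Cmod_R, Rabs_pos_eq; lra. Qed.

Lemma qpoch_nz (al : C) k : (Cmod al < 1)%R -> qpoch q al k <> RtoC 0.
Proof.
  intros H. induction k. simpl. apply RtoC_nz. lra.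
  simpl. apply Cmult_neq_0; auto. apply fac_nz; auto.
Qed.

Lemma ell_fact k : ell q d e (S k) =
  (RtoC 1 - Q * RtoC (q ^ k)) * (RtoC 1 - d * RtoC (q ^ k)) * (RtoC 1 - e * RtoC (q ^ k)).
Proof.
  unfold ell. cbv zeta. rewrite pown_S, pown_RtoC. fold Q. field. apply Qnz.
Qed.

Lemma rho_fact j k : rho q a b c j k =
  (RtoC 1 - RtoC (q ^ j)) * (RtoC 1 - a * RtoC (q ^ k)) * (RtoC 1 - b * RtoC (q ^ k)) * (RtoC 1 - c * RtoC (q ^ k)).
Proof. unfold rho. cbv zeta. rewrite !pown_RtoC. ring. Qed.

Lemma ell_nz k : ell q d e (S k) <> RtoC 0.
Proof.
  rewrite ell_fact. repeat apply Cmult_neq_0; apply fac_nz; auto. apply CmodQ.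
Qed.

Lemma phi0 n : phi_coef q a b c d e n 0 = RtoC 1.
Proof.
  unfold phi_coef, qbinom. rewrite Nat.sub_0_r. simpl qpoch.
  assert (qpoch q (RtoC q) n <> RtoC 0) by (apply qpoch_nz; apply CmodQ).
  field. auto.
Qed.

Lemma phi_rec n k : (k < n)%nat ->
  phi_coef q a b c d e n (S k) * ell q d e (S k) = phi_coef q a b c d e n k * rho q a b c (n - k) k.
Proof.
  intros Hk. rewrite ell_fact, rho_fact. unfold phi_coef, qbinom.
  replace (n - k)%nat with (S (n - S k)) by lia. cbn [qpoch].
  replace (q ^ S (n - S k))%R with (q * q ^ (n - S k))%R by reflexivity.
  rewrite (RtoC_mult q). fold Q.
  pose proof (qpoch_nz Q k CmodQ). pose proof (qpoch_nz Q (n - S k) CmodQ).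
  pose proof (qpoch_nz d k hd). pose proof (qpoch_nz e k he).
  pose proof (fac_nz (al:=Q) k CmodQ). pose proof (fac_nz (al:=Q) (n - S k) CmodQ).
  pose proof (fac_nz (al:=d) k hd). pose proof (fac_nz (al:=e) k he).
  match goal with |- ?x = ?y => change (@eq C x y) end. field. repeat split; auto.
Qed.

Lemma closed_form (A : nat -> nat -> C) n :
  (forall k, (k < n)%nat -> A (n - S k)%nat (S k) * ell q d e (S k) = A (n - k)%nat k * rho q a b c (n - k) k) ->
  forall m, (m <= n)%nat -> A (n - m)%nat m = A n O * phi_coef q a b c d e n m.
Proof.
  intros Hrec m. induction m; intros Hm.
  - rewrite phi0, Nat.sub_0_r. ring.
  - specialize (Hrec m Hm). rewrite IHm in Hrec by lia.
    pose proof (phi_rec Hm). pose proof (ell_nz (k:=m)).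
    apply (Cmult_reg (l := ell q d e (S m))); auto. rewrite Hrec.
    rewrite <- (Cmult_assoc (A n 0%nat) (phi_coef q a b c d e n (S m))), H. ring.
Qed.

Lemma rec_from_closed (A : nat -> nat -> C) (mu : C) n :
  (forall m, (m <= n)%nat -> A (n - m)%nat m = mu * phi_coef q a b c d e n m) ->
  forall k, (k < n)%nat -> A (n - S k)%nat (S k) * ell q d e (S k) = A (n - k)%nat k * rho q a b c (n - k) k.
Proof.
  intros H k Hk. rewrite !H by lia. rewrite <- Cmult_assoc, phi_rec by auto. ring.
Qed.
End Phi.


Open Scope C_scope.

Lemma conv_minus u v lu lv : conv u lu -> conv v lv -> conv (fun n => u n - v n) (lu - lv).
Proof.
  intros Hu Hv. apply conv_plus; auto.
  apply (@conv_ext (fun n => RtoC (-1) * v n) _ _ O). intros; ring.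
  replace (- lv) with (RtoC (-1) * lv) by ring. apply conv_scal; auto.
Qed.

Section OpConv.
Variables (q : R) (a b c d e : C).
Let Q := RtoC q.
Lemma Op_conv (S : nat -> C -> C -> C) (F : C -> C -> C) x y :
  (forall X Y, (X = x \/ X = x * Q) -> (Y = y \/ Y = y * Q \/ Y = y * Q * Q \/ Y = y * Q * Q * Q) ->
     conv (fun N => S N X Y) (F X Y)) ->
  conv (fun N => Op q a b c d e (S N) x y) (Op q a b c d e F x y).
Proof.
  intros H. unfold Op, OpL, OpR.
  repeat (first [ apply conv_minus | apply conv_plus | apply conv_scal
                | apply H; fold Q; auto 6 ]).
Qed.
End OpConv.

Lemma CmodxQ (x : C) (q : R) : (0 < q < 1)%R -> (Cmod (x * RtoC q) <= Cmod x)%R.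
Proof.
  intros Hq. rewrite Cmod_mult, Cmod_R, Rabs_pos_eq by lra. pose proof (Cmod_ge_0 x). nra.
Qed.

Section Main.
Variables (q : R) (cf : coef7) (r : R) (f : C -> C -> C -> C -> C -> C -> C -> C).
Hypotheses (hq0 : (0 < q)%R) (hq1 : (q < 1)%R) (hf : analytic7_rep cf r f).

Lemma Op_series a b c d e x y :
  (Cmod a < r)%R -> (Cmod b < r)%R -> (Cmod c < r)%R -> (Cmod d < r)%R -> (Cmod e < r)%R ->
  (Cmod x < r)%R -> (Cmod y < r)%R ->
  is_series (fun n => En q a b c d e (Acoef cf a b c d e) x y n) (Op q a b c d e (f a b c d e) x y).
Proof.
  intros Ha Hb Hc Hd He Hx Hy.
  destruct hf as [Hr _]. destruct (analytic_bound hf) as [M HM].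
  apply is_series_conv.
  apply (@conv_ext (fun N => Op q a b c d e (fun X Y => sum_n (fun n => Pn cf a b c d e n X Y) N) x y) _ _ O).
  { intros N _. rewrite Op_sum. apply sum_n_ext. intros n. unfold Pn. apply Op_P. }
  apply Op_conv. intros X Y HX HY. apply is_series_conv. apply (diag_rep Hr HM hf); auto.
  - destruct HX as [->| ->]; auto. eapply Rle_lt_trans. apply CmodxQ; lra. auto.
  - assert (Hyq : forall z, (Cmod z < r)%R -> (Cmod (z * RtoC q) < r)%R).
    { intros z Hz. eapply Rle_lt_trans. apply CmodxQ; lra. auto. }
    destruct HY as [->|[->|[->| ->]]]; auto.
Qed.

Lemma series_zero_unique (u : nat -> C) l : (forall n, u n = RtoC 0) -> is_series u l -> l = RtoC 0.
Proof.
  intros H0 H. apply is_series_conv in H. eapply conv_unique. apply H.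
  apply (@conv_ext (fun _ => RtoC 0) _ _ O). intros n _. symmetry. rewrite (sum_n_ext _ (fun _ => RtoC 0)) by auto.
  apply sumC_zero. apply conv_const.
Qed.
End Main.


Open Scope C_scope.

Lemma pown_one n : pow_n (RtoC 1) n = RtoC 1.
Proof. induction n. reflexivity. rewrite pown_S, IHn. Cring. Qed.

Lemma series_finite (u : nat -> C) M : (forall m, (M < m)%nat -> u m = RtoC 0) -> is_series u (sum_n u M).
Proof.
  intros H. apply is_series_conv. apply (@conv_ext (fun _ => sum_n u M) _ _ M).
  intros n Hn. symmetry. apply sumC_tail; auto. apply conv_const.
Qed.

Section Coef.
Variables (q : R) (a b c d e : C) (A : nat -> nat -> C) (n : nat).

Definition gam (m : nat) : C := if Nat.leb m n then A (n - m)%nat m * ell q d e m else RtoC 0.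
Definition del (m : nat) : C :=
  match m with O => RtoC 0 | S k => if Nat.leb k n then A (n - k)%nat k * rho q a b c (n - k) k else RtoC 0 end.

Lemma En_poly w : En q a b c d e A (RtoC 1) w n = sum_n (fun m => (gam m - del m) * pow_n w m) (S n).
Proof.
  rewrite (sum_n_ext _ (fun m => gam m * pow_n w m - del m * pow_n w m)) by (intros; Cring).
  rewrite sumC_minus. unfold En.
  rewrite (sum_n_ext _ (fun k => A (n - k)%nat k * ell q d e k * pow_n w k
       - A (n - k)%nat k * rho q a b c (n - k) k * pow_n w k * w)).
  2: { intros k. unfold Eterm. rewrite pown_one. Cring. }
  rewrite sumC_minus. f_equal.
  - rewrite sumC_Sn. assert (Hg : gam (S n) = RtoC 0).
    { unfold gam. destruct (Nat.leb_spec (S n) n); try lia. reflexivity. }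
    rewrite Hg.
    rewrite (sum_n_ext_loc (fun i => gam i * pow_n w i) (fun k => A (n - k)%nat k * ell q d e k * pow_n w k)). Cring.
    intros k Hk. unfold gam. destruct (Nat.leb_spec k n); try lia. reflexivity.
  - rewrite (@sum_shift C_AbelianMonoid (fun m => del m * pow_n w m) n). rewrite plusC.
    simpl del. rewrite (sum_n_ext_loc (fun k => del (S k) * pow_n w (S k)) (fun k => A (n - k)%nat k * rho q a b c (n - k) k * pow_n w k * w)).
    Cring. intros k Hk. cbn [del]. destruct (Nat.leb_spec k n); try lia. rewrite pown_S. Cring.
Qed.

Lemma rec_from_vanish : (forall w, (Cmod w < 1)%R -> En q a b c d e A (RtoC 1) w n = RtoC 0) ->
  forall k, (k < n)%nat -> A (n - S k)%nat (S k) * ell q d e (S k) = A (n - k)%nat k * rho q a b c (n - k) k.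
Proof.
  intros H k Hk.
  assert (Hc : forall m, gam m - del m = RtoC 0).
  { apply (@series_unique _ 1%R). lra. intros t Ht.
    rewrite <- (H t Ht). rewrite En_poly. apply series_finite.
    intros m Hm. unfold gam, del. destruct m; [lia|].
    destruct (Nat.leb_spec (S m) n); destruct (Nat.leb_spec m n); try lia. Cring. }
  specialize (Hc (S k)). unfold gam, del in Hc.
  destruct (Nat.leb_spec (S k) n); destruct (Nat.leb_spec k n); try lia.
  replace (A (n - S k)%nat (S k) * ell q d e (S k)) with
    (A (n - S k)%nat (S k) * ell q d e (S k) - A (n - k)%nat k * rho q a b c (n - k) k + A (n - k)%nat k * rho q a b c (n - k) k) by Cring.
  rewrite Hc. Cring.
Qed.
End Coef.


Open Scope C_scope.

Lemma Cmod_lt_min (z : C) (r1 r2 r3 : R) : (Cmod z < Rmin (Rmin r1 r2) r3)%R ->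
  (Cmod z < r1 /\ Cmod z < r2 /\ Cmod z < r3)%R.
Proof.
  intros H. pose proof (Rmin_l (Rmin r1 r2) r3). pose proof (Rmin_r (Rmin r1 r2) r3).
  pose proof (Rmin_l r1 r2). pose proof (Rmin_r r1 r2). lra.
Qed.

Lemma Rmin3_pos (r1 r2 r3 : R) : (0 < r1)%R -> (0 < r2)%R -> (0 < r3)%R -> (0 < Rmin (Rmin r1 r2) r3)%R.
Proof. intros. repeat apply Rmin_glb_lt; auto. Qed.

Lemma pown_zero_S k : pow_n (RtoC 0) (S k) = RtoC 0.
Proof. rewrite pown_S. Cring. Qed.

Unset Implicit Arguments.
Theorem theorem1 (q : R) (hq0 : (0 < q)%R) (hq1 : (q < 1)%R)
  (f : C -> C -> C -> C -> C -> C -> C -> C) (cf : coef7) (r : R)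
  (hf : analytic7_rep cf r f) :
  ((exists r' : R, (0 < r')%R /\
      forall a b c d e x y : C,
        (Cmod a < r')%R -> (Cmod b < r')%R -> (Cmod c < r')%R ->
        (Cmod d < r')%R -> (Cmod e < r')%R -> (Cmod x < r')%R ->
        (Cmod y < r')%R ->
        qeq q f a b c d e x y)
   <-> (exists mu : C -> C -> C -> C -> C -> nat -> C, expandable q cf mu))
  /\
  (forall mu : C -> C -> C -> C -> C -> nat -> C, expandable q cf mu ->
     exists rho : R, (0 < rho)%R /\
       forall a b c d e x : C,
         (Cmod a < rho)%R -> (Cmod b < rho)%R -> (Cmod c < rho)%R ->
         (Cmod d < rho)%R -> (Cmod e < rho)%R -> (Cmod x < rho)%R ->
         is_series (fun n => mu a b c d e n * pow_n x n) (f a b c d e x (RtoC 0))).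
Proof.
  pose proof hf as [Hr _]. destruct (analytic_bound hf) as [M HM].
  assert (Hcl : forall mu rho0, (0 < rho0)%R -> (forall a b c d e : C,
      (Cmod a < rho0)%R -> (Cmod b < rho0)%R -> (Cmod c < rho0)%R ->
      (Cmod d < rho0)%R -> (Cmod e < rho0)%R ->
      forall j k : nat,
        taylor_xy_is cf a b c d e j k
          (mu a b c d e (j + k)%nat * phi_coef q a b c d e (j + k) k)) ->
      forall a b c d e, (Cmod a < rho0)%R -> (Cmod b < rho0)%R -> (Cmod c < rho0)%R ->
      (Cmod d < rho0)%R -> (Cmod e < rho0)%R ->
      forall n m, (m <= n)%nat -> Acoef cf a b c d e (n - m)%nat m = mu a b c d e n * phi_coef q a b c d e n m).
  { intros mu rho0 Hrho Hexp a b c d e Ha Hb Hc Hd He n m Hmn.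
    rewrite (Acoef_unique (Hexp a b c d e Ha Hb Hc Hd He (n - m)%nat m)).
    replace (n - m + m)%nat with n by lia. reflexivity. }
  split; [split|].
  -
    intros [r' [Hr' Hq]].
    exists (fun a b c d e n => Acoef cf a b c d e n O).
    set (s0 := Rmin (Rmin r' r) 1).
    assert (Hs0 : (0 < s0)%R) by (apply Rmin3_pos; lra).
    exists s0. split; auto.
    intros a b c d e Ha Hb Hc Hd He j k.
    apply Cmod_lt_min in Ha, Hb, Hc, Hd, He.
    set (A := Acoef cf a b c d e).
    assert (Hvan : forall u v, (Cmod u < s0)%R -> (Cmod v < s0)%R -> forall m, En q a b c d e A u v m = RtoC 0).
    { intros u v Hu Hv m.
      set (bb := fun m => match m with O => RtoC 0 | S m' => En q a b c d e A u v m' end).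
      change (En q a b c d e A u v m) with (bb (S m)).
      apply (@series_unique bb 1%R). lra. intros t Ht.
      assert (Hu' : (Cmod (t * u) < s0)%R).
      { rewrite Cmod_mult. pose proof (Cmod_ge_0 t). pose proof (Cmod_ge_0 u). nra. }
      assert (Hv' : (Cmod (t * v) < s0)%R).
      { rewrite Cmod_mult. pose proof (Cmod_ge_0 t). pose proof (Cmod_ge_0 v). nra. }
      apply Cmod_lt_min in Hu', Hv'.
      pose proof (Op_series hq0 hq1 hf (a:=a) (b:=b) (c:=c) (d:=d) (e:=e) (x:=t*u) (y:=t*v)) as Hs.
      assert (Hz : Op q a b c d e (f a b c d e) (t * u) (t * v) = RtoC 0).
      { apply qeq_Op. apply Hq; tauto. }
      rewrite Hz in Hs. specialize (Hs ltac:(tauto) ltac:(tauto) ltac:(tauto) ltac:(tauto) ltac:(tauto) ltac:(tauto) ltac:(tauto)).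
      apply is_series_decr_1.
      match goal with |- is_series _ ?l => replace l with (RtoC 0) end.
      2: { simpl. change (RtoC 0 = RtoC 0 + - (RtoC 0 * pow_n t 0)). Cring. }
      eapply is_series_ext. 2: exact Hs. intros n. unfold A. rewrite En_homog. simpl bb. unfold A. apply Cmult_comm. }
    assert (Hrec : forall n kk, (kk < n)%nat -> A (n - S kk)%nat (S kk) * ell q d e (S kk) = A (n - kk)%nat kk * rho q a b c (n - kk) kk).
    { intros n. apply rec_from_vanish. intros w Hw.
      set (s := (s0 / 2)%R).
      assert (Hs : (0 < s)%R) by (unfold s; lra).
      assert (H1 : En q a b c d e A (RtoC s * RtoC 1) (RtoC s * w) n = RtoC 0).
      { apply Hvan. rewrite Cmod_mult, Cmod_R, Cmod_R, Rabs_pos_eq, Rabs_pos_eq; unfold s; lra.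
        rewrite Cmod_mult, Cmod_R, Rabs_pos_eq by lra. pose proof (Cmod_ge_0 w). unfold s; nra. }
      rewrite En_homog in H1. apply (Cmult_reg (l := pow_n (RtoC s) (S n))).
      rewrite pown_RtoC. apply RtoC_nz. apply pow_nonzero. lra.
      rewrite Cmult_comm, H1. Cring. }
    assert (Hclosed := fun n => closed_form hq0 hq1 (proj2 (proj2 Hd)) (proj2 (proj2 He)) A (Hrec n)).
    destruct (taylor_ex Hr HM a b c d e j k) as [A0 [HA0 _]]; try lra.
    apply taylor_conv in HA0.
    pose proof (Hclosed (j + k)%nat k ltac:(lia)) as Hck.
    replace (j + k - k)%nat with j in Hck by lia.
    unfold A in *. cbv beta. rewrite <- Hck. rewrite (Acoef_unique HA0). exact HA0.
  -
    intros [mu [rho0 [Hrho Hexp]]].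
    set (s0 := Rmin (Rmin rho0 r) 1).
    assert (Hs0 : (0 < s0)%R) by (apply Rmin3_pos; lra).
    exists s0. split; auto.
    intros a b c d e x y Ha Hb Hc Hd He Hx Hy.
    apply Cmod_lt_min in Ha, Hb, Hc, Hd, He, Hx, Hy.
    apply qeq_Op.
    pose proof (Op_series hq0 hq1 hf (a:=a) (b:=b) (c:=c) (d:=d) (e:=e) (x:=x) (y:=y)) as Hs.
    specialize (Hs ltac:(tauto) ltac:(tauto) ltac:(tauto) ltac:(tauto) ltac:(tauto) ltac:(tauto) ltac:(tauto)).
    eapply series_zero_unique. 2: exact Hs. intros n.
    apply En_zero. apply (@rec_from_closed q a b c d e hq0 hq1 (proj2 (proj2 Hd)) (proj2 (proj2 He)) _ (mu a b c d e n)).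
    intros m Hm. apply (Hcl mu rho0 Hrho Hexp); tauto.
  -
    intros mu [rho0 [Hrho Hexp]].
    set (s0 := Rmin (Rmin rho0 r) 1).
    assert (Hs0 : (0 < s0)%R) by (apply Rmin3_pos; lra).
    exists s0. split; auto.
    intros a b c d e x Ha Hb Hc Hd He Hx.
    apply Cmod_lt_min in Ha, Hb, Hc, Hd, He, Hx.
    assert (Hd1 : (Cmod d < 1)%R) by tauto. assert (He1 : (Cmod e < 1)%R) by tauto.
    assert (H0 : (Cmod (RtoC 0) < r)%R) by (rewrite Cmod_0; lra).
    pose proof (diag_rep Hr HM hf a b c d e x (RtoC 0)) as Hs.
    specialize (Hs ltac:(tauto) ltac:(tauto) ltac:(tauto) ltac:(tauto) ltac:(tauto) ltac:(tauto) H0).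
    eapply is_series_ext. 2: exact Hs. intros n.
    assert (HA : Acoef cf a b c d e n O = mu a b c d e n).
    { pose proof (Hcl mu rho0 Hrho Hexp a b c d e ltac:(tauto) ltac:(tauto) ltac:(tauto) ltac:(tauto) ltac:(tauto) n O ltac:(lia)) as Hn.
      rewrite Nat.sub_0_r in Hn. rewrite Hn, phi0; auto. Cring. }
    unfold Pn. destruct n.
    + rewrite sum_O. rewrite Nat.sub_0_r. rewrite HA. rewrite !pown_0. Cring.
    + rewrite (@sum_shift C_AbelianMonoid). rewrite plusC.
      rewrite (sum_n_ext _ (fun _ => RtoC 0)). rewrite sumC_zero. rewrite Nat.sub_0_r, HA, pown_0. Cring.
      intros k. rewrite pown_zero_S. Cring.
Qed.
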